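(* Let $m\in\mathbb{N}$ and $V\in H_{+}^{-m}$ be a 1-periodic complex-valued distribution. Define on $L_2(0,1)$ the forms $t_V^{\pm}[u,v]=\langle V(x)u,v\rangle_{\pm}$ and $\tau_\pm[u,v]=\langle D_\pm^{2m}u,v\rangle_\pm$, both with domain $H_\pm^m$. Then $t_V^{\pm}$ is $\tau_\pm$-bounded with relative bound zero: for every $\delta>0$ there exists a constant $C_\delta\ge0$ such that $$|t_V^{\pm}[u]|\le\delta\,\tau_\pm[u]+C_\delta\|u\|^2_{L_2(0,1)},\qquad u\in H_\pm^m.$$
   Context: For $s\in\mathbb{R}$, $H_{+}^{s}$ is the space of formal series $f=\sum_{k\in\mathbb{Z}}\widehat f(2k)e^{i2k\pi x}$ with $\|f\|_{H_+^s}^2=\sum_k\langle 2k\rangle^{2s}|\widehat f(2k)|^2<\infty$, and $H_{-}^{s}$ is the space of formal series $f=\sum_{k}\widehat f(2k+1)e^{i(2k+1)\pi x}$ with $\|f\|_{H_-^s}^2=\sum_k\langle 2k+1\rangle^{2s}|\widehat f(2k+1)|^2<\infty$, where $\langle k\rangle=1+|k|$; $H_\pm^0=L_2(0,1)$. $\langle\cdot,\cdot\rangle_{\pm}$ is the pairing between $H_\pm^{s}$ and $H_\pm^{-s}$ extending the $L_2(0,1)$ inner product. $D_\pm^{2m}$ acts as multiplication by $(n\pi)^{2m}$ on the mode $e^{in\pi x}$. For $u\in H_\pm^{m}$, $V(x)u=\sum_n\big(\sum_j\widehat V(n-j)\widehat u(j)\big)e^{in\pi x}\in H_\pm^{-m}$.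 For a form $t$, $t[u]:=t[u,u]$. *)

(* Defs.v *)
From HB Require Import structures.
From mathcomp Require Import all_boot all_order all_algebra.
From mathcomp Require Import all_classical all_reals all_analysis.
From mathcomp Require Export complex.
Export Order.TTheory GRing.Theory Num.Theory.
Export numFieldNormedType.Exports.
Set Implicit Arguments. Unset Strict Implicit. Unset Printing Implicit Defensive.
Local Open Scope ring_scope.

(* A 1-periodic (formal) series f = sum_n fhat(n) e^{i n pi x} is represented
   by its coefficient function  fhat : int -> R[i]  (n is the frequency index,
   i.e. fhat n is the coefficient of e^{i n pi x}). *)

Section Defs.
Variable R : realType.
Local Notation C := R[i].

Definition jb (n : int) : C := ((1 + `|n|)%:~R : C).

Definition zpsum (a : int -> C) (N : nat) : C :=
  \sum_(i < (2 * N).+1) a (i%:Z - N%:Z).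

Definition zsum (a : int -> C) : C := limn (zpsum a : nat -> C^o).

(* parity class: [neg = false] is "+" (even frequencies 2k),
                 [neg = true]  is "-" (odd frequencies 2k+1) *)
Definition in_class (neg : bool) (n : int) : bool := odd (absz n) == neg.

Definition Hs (neg : bool) (s : int) (f : int -> C) : Prop :=
  (forall n, ~~ in_class neg n -> f n = 0) /\
  cvgn (zpsum (fun n => jb n ^ (2 * s) * `|f n| ^+ 2) : nat -> C^o).

(* pairing <f, g>_{+-} extending the L2(0,1) inner product
   (the e^{i n pi x}, n in one parity class, are orthonormal in L2(0,1)) *)
Definition pairing (f g : int -> C) : C := zsum (fun n => f n * (g n)^*).

Definition mulV (V u : int -> C) : int -> C :=
  fun n => zsum (fun j => V (n - j) * u j).

(* D^{2m} acts as multiplication by (n pi)^{2m} on e^{i n pi x} *)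
Definition D2m (m : nat) (u : int -> C) : int -> C :=
  fun n => real_complex R ((n%:~R * pi) ^+ (2 * m)) * u n.

Definition tV (V u : int -> C) : C := pairing (mulV V u) u.
Definition tau (m : nat) (u : int -> C) : C := pairing (D2m m u) u.
Definition L2norm2 (u : int -> C) : C := pairing u u.

End Defs.

(* Main.v *)
Require Import Defs.
From HB Require Import structures.
From mathcomp Require Import all_boot all_order all_algebra.
From mathcomp Require Import all_classical all_reals all_analysis.
From mathcomp Require Import complex.
From mathcomp Require Import zify ring lra.
Import Order.TTheory GRing.Theory Num.Theory.
Import numFieldNormedType.Exports.
Local Open Scope ring_scope.
Local Open Scope classical_set_scope.

Section A.
Variable R : realType.

Definition zr_def (N : nat) : seq int := [seq (i%:Z - N%:Z) | i <- iota 0 (2 * N).+1].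
Fact zr_key : unit. Proof. exact: tt. Qed.
Definition zr := locked_with zr_key zr_def.
Lemma zrE N : zr N = zr_def N. Proof. by rewrite /zr locked_withE. Qed.

Lemma zpsumE (a : int -> R[i]) N : zpsum a N = \sum_(n <- zr N) a n.
Proof.
by rewrite zrE /zpsum big_map -(big_mkord xpredT (fun i => a (i%:Z - N%:Z))) /index_iota subn0.
Qed.

Lemma mem_zr n N : (n \in zr N) = (absz n <= N)%N.
Proof.
rewrite zrE; apply/mapP/idP.
  move=> [i0]; rewrite mem_iota => /andP[_ Hi] ->. lia.
move=> H; exists (absz (n + N%:Z)).
  rewrite mem_iota /=; lia.
lia.
Qed.

Lemma uniq_zr N : uniq (zr N).
Proof.
rewrite zrE map_inj_uniq ?iota_uniq // => i j /= H; lia.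
Qed.

Lemma zr_sub N M : (N <= M)%N -> {subset zr N <= zr M}.
Proof. move=> NM n; rewrite !mem_zr => H; lia. Qed.

Lemma sum_sub (s t : seq int) (f : int -> R) : uniq s -> uniq t -> {subset s <= t} ->
  (forall x, 0 <= f x) -> \sum_(x <- s) f x <= \sum_(x <- t) f x.
Proof.
move=> Us Ut st f0.
rewrite [X in _ <= X](bigID (fun x => x \in s)) /= -[X in _ <= X + _]big_filter.
have P : perm_eq [seq x <- t | x \in s] s.
  apply: uniq_perm; first exact: filter_uniq.
  - exact: Us.
  by move=> x; rewrite mem_filter; case: (boolP (x \in s)) => // /st ->.
rewrite (perm_big _ P) lerDl; apply: sumr_ge0 => *; exact: f0.
Qed.

Lemma sum_ind (s t : seq int) (f : int -> R) : uniq s -> uniq t -> {subset s <= t} ->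
  \sum_(x <- t) (if x \in s then f x else 0) = \sum_(x <- s) f x.
Proof.
move=> Us Ut st.
rewrite -big_mkcond -big_filter.
have P : perm_eq [seq x <- t | x \in s] s.
  apply: uniq_perm; first exact: filter_uniq.
  - exact: Us.
  by move=> x; rewrite mem_filter; case: (boolP (x \in s)) => // /st ->.
by rewrite (perm_big _ P).
Qed.

Lemma sum_inj (f : int -> R) (g : int -> int) (c : nat) K N :
  injective g -> (forall n, (absz (g n) <= absz n + c)%N) ->
  (forall x, 0 <= f x) -> (forall M, \sum_(k <- zr M) f k <= K) ->
  \sum_(n <- zr N) f (g n) <= K.
Proof.
move=> ig gc f0 HK.
rewrite -(big_map g xpredT f).
apply: le_trans (HK (N + c)%N).
apply: sum_sub => //; first by rewrite map_inj_uniq // uniq_zr.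
  exact: uniq_zr.
move=> k /mapP [n]; rewrite mem_zr => H ->; rewrite mem_zr.
by apply: leq_trans (gc n) _; rewrite leq_add2r.
Qed.

Lemma zr_perm K : perm_eq (zr K.+1) ((K.+1)%:Z :: (- (K.+1)%:Z) :: zr K).
Proof.
have h1 : (K.+1)%:Z \notin zr K by rewrite mem_zr; lia.
have h2 : - (K.+1)%:Z \notin zr K by rewrite mem_zr; lia.
apply: uniq_perm; first exact: uniq_zr.
  apply/andP; split; first by rewrite in_cons negb_or h1 andbT; apply/eqP; lia.
  by apply/andP; split; [exact: h2 | exact: uniq_zr].
move=> x; rewrite mem_zr (@in_cons _ _ (_ :: zr K) x) (@in_cons _ _ (zr K) x) mem_zr.
apply/idP/idP; [move=> H; lia | move=> H; lia].
Qed.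

Lemma zr_rec (f : int -> R) K : \sum_(n <- zr K.+1) f n = f (K.+1)%:Z + f (- (K.+1)%:Z) + \sum_(n <- zr K) f n.
Proof. rewrite (perm_big _ (zr_perm K)) !big_cons /=; by rewrite addrA. Qed.

End A.
Section C.
Variable R : realType.
Local Notation C := R[i].
Local Notation nc := (@Normc.normc R).
Local Notation "x %:C" := (real_complex R x).

Lemma normE (z : C) : `|z| = (nc z)%:C.
Proof. by case: z. Qed.

Lemma nc_ge0 (z : C) : 0 <= nc z.
Proof. by rewrite -lecR -normE normr_ge0. Qed.

Lemma ncR (x : R) : nc (x%:C) = `|x|.
Proof. by rewrite /Normc.normc /= expr0n /= addr0 sqrtr_sqr. Qed.

Lemma ncD (x y : C) : nc (x + y) <= nc x + nc y.
Proof. by rewrite -lecR rmorphD /= -!normE ler_normD. Qed.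

Lemma ncM (x y : C) : nc (x * y) = nc x * nc y.
Proof. exact: Normc.normcM. Qed.

Lemma LB (s : nat -> C^o) (l : C^o) (B : R) : s @ \oo --> l ->
  (forall n, nc (s n) <= B) -> nc l <= B.
Proof.
move=> sl sB; rewrite leNgt; apply/negP => Hlt.
have e0 : (0 : C) < (nc l - B)%:C by rewrite ltcR subr_gt0.
have [N _ HN] := (cvgrPdist_lt _ _).1 sl _ e0.
have := HN N (leqnn N); rewrite /= normE ltcR => H.
have := ncD (l - s N) (s N); rewrite subrK.
have := sB N. lra.
Qed.


Lemma nc_Re (z : C) : `|complex.Re z| <= nc z.
Proof.
case: z => x y; rewrite /Normc.normc /= -sqrtr_sqr; apply: ler_wsqrtr.
by rewrite lerDl sqr_ge0.
Qed.

Lemma nc_Im (z : C) : `|complex.Im z| <= nc z.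
Proof.
case: z => x y; rewrite /Normc.normc /= -sqrtr_sqr; apply: ler_wsqrtr.
by rewrite lerDr sqr_ge0.
Qed.

Lemma nc_le (z : C) : nc z <= `|complex.Re z| + `|complex.Im z|.
Proof.
case: z => x y; rewrite /Normc.normc /=.
rewrite -[X in _ <= X]ger0_norm ?addr_ge0 // -sqrtr_sqr; apply: ler_wsqrtr.
rewrite sqrrD -[x ^+ 2](real_normK (num_real x)) -[y ^+ 2](real_normK (num_real y)) -addrA lerD2l lerDr.
by rewrite mulrn_wge0 ?mulr_ge0.
Qed.

Lemma pos_complex (e : C) : 0 < e -> exists2 a : R, 0 < a & e = a%:C.
Proof. by case: e => a b; rewrite ltcE /= => /andP[/eqP -> a0]; exists a. Qed.

Lemma real_cvgC (r : nat -> R) (l : R) : r @ \oo --> l ->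
  ((fun n => (r n)%:C) : nat -> C^o) @ \oo --> (l%:C : C^o).
Proof.
move=> rl; apply/cvgrPdist_lt => e /pos_complex [a a0 ->].
near=> t; rewrite /= -rmorphB normE ncR ltcR; near: t.
exact: (cvgrPdist_lt _ _).1 rl _ a0.
Unshelve. all: by end_near.
Qed.

Lemma cvgC_ReIm (s : nat -> C^o) (a b : R) :
  (fun n => complex.Re (s n)) @ \oo --> a -> (fun n => complex.Im (s n)) @ \oo --> b ->
  s @ \oo --> ((a +i* b)%C : C^o).
Proof.
move=> Ha Hb; apply/cvgrPdist_lt => e /pos_complex [c c0 ->].
have c2 : 0 < c / 2 by rewrite divr_gt0.
have H1 := (cvgrPdist_lt _ _).1 Ha _ c2.
have H2 := (cvgrPdist_lt _ _).1 Hb _ c2.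
near=> t.
have h1 : `|a - complex.Re (s t)| < c / 2 by near: t; exact: H1.
have h2 : `|b - complex.Im (s t)| < c / 2 by near: t; exact: H2.
rewrite normE ltcR; apply: le_lt_trans (nc_le _) _.
have -> : complex.Re ((a +i* b)%C - s t) = a - complex.Re (s t) by case: (s t).
have -> : complex.Im ((a +i* b)%C - s t) = b - complex.Im (s t) by case: (s t).
lra.
Unshelve. all: by end_near.
Qed.

Lemma ND (f : int -> R) (K : R) : (forall x, 0 <= f x) ->
  (forall N, \sum_(n <- zr N) f n <= K) ->
  cvgn (fun N => \sum_(n <- zr N) f n) /\
  forall N, \sum_(n <- zr N) f n <= limn (fun N => \sum_(n <- zr N) f n).
Proof.
move=> f0 fK.
have hom : {homo (fun N => \sum_(n <- zr N) f n) : n m / (n <= m)%N >-> n <= m}.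
  by move=> n m nm; apply: sum_sub => //; [exact: uniq_zr | exact: uniq_zr | exact: zr_sub].
have cv : cvgn (fun N => \sum_(n <- zr N) f n).
  apply: nondecreasing_is_cvgn => //; exists K => _ [N _ <-]; exact: fK.
by split=> //; apply: nondecreasing_cvgn_le.
Qed.

Lemma Re_sum (s : seq int) (a : int -> C) : complex.Re (\sum_(n <- s) a n) = \sum_(n <- s) complex.Re (a n).
Proof.
elim: s => [|x s IH]; first by rewrite !big_nil.
by rewrite !big_cons -IH; case: (a x); case: (\sum_(n <- s) a n).
Qed.

Lemma Im_sum (s : seq int) (a : int -> C) : complex.Im (\sum_(n <- s) a n) = \sum_(n <- s) complex.Im (a n).
Proof.
elim: s => [|x s IH]; first by rewrite !big_nil.
by rewrite !big_cons -IH; case: (a x); case: (\sum_(n <- s) a n).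
Qed.

Lemma real_AS (g : int -> R) (K : R) : (forall N, \sum_(n <- zr N) `|g n| <= K) ->
  exists l : R, (fun N => \sum_(n <- zr N) g n) @ \oo --> l.
Proof.
move=> HK.
have h1 : forall x, 0 <= `|g x| + g x.
  by move=> x; have := ler_norm (- g x); rewrite normrN => H; lra.
have h2 : forall N, \sum_(n <- zr N) (`|g n| + g n) <= K + K.
  move=> N; rewrite big_split /=; apply: lerD => //.
  apply: le_trans (HK N); apply: ler_sum => n _; exact: ler_norm.
have [c1 _] := @ND _ _ h1 h2.
have [c2 _] := @ND (fun n => `|g n|) K (fun x => normr_ge0 _) HK.
exists (limn (fun N => \sum_(n <- zr N) (`|g n| + g n)) - limn (fun N => \sum_(n <- zr N) `|g n|)).
have -> : (fun N => \sum_(n <- zr N) g n) = (fun N => \sum_(n <- zr N) (`|g n| + g n)) - (fun N => \sum_(n <- zr N) `|g n|).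
  by apply/funext => N; rewrite !fctE -sumrB; apply: eq_bigr => n _; lra.
exact: cvgB.
Qed.


Lemma AS (a : int -> C) (K : R) : (forall N, \sum_(n <- zr N) nc (a n) <= K) ->
  exists l : C^o, (zpsum a : nat -> C^o) @ \oo --> l.
Proof.
move=> HK.
have [l1 H1] : exists l : R, (fun N => \sum_(n <- zr N) complex.Re (a n)) @ \oo --> l.
  apply: (@real_AS _ K) => N; apply: le_trans (HK N).
  by apply: ler_sum => n _; exact: nc_Re.
have [l2 H2] : exists l : R, (fun N => \sum_(n <- zr N) complex.Im (a n)) @ \oo --> l.
  apply: (@real_AS _ K) => N; apply: le_trans (HK N).
  by apply: ler_sum => n _; exact: nc_Im.
exists (l1 +i* l2)%C; apply: (@cvgC_ReIm (zpsum a : nat -> C^o)).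
  by have -> : (fun n => complex.Re (zpsum a n)) = (fun N => \sum_(n <- zr N) complex.Re (a n))
    by apply/funext => N; rewrite zpsumE Re_sum.
by have -> : (fun n => complex.Im (zpsum a n)) = (fun N => \sum_(n <- zr N) complex.Im (a n))
    by apply/funext => N; rewrite zpsumE Im_sum.
Qed.

Lemma zsumE (a : int -> C) (l : C^o) : (zpsum a : nat -> C^o) @ \oo --> l -> zsum a = l.
Proof. move=> H; exact: (cvg_lim (@norm_hausdorff _ _) H). Qed.

Lemma FinLim (s : seq int) (g : nat -> int -> C) (l : int -> C) :
  (forall n, (fun M => g M n : C^o) @ \oo --> (l n : C^o)) ->
  (fun M => \sum_(n <- s) g M n : C^o) @ \oo --> (\sum_(n <- s) l n : C^o).
Proof.
move=> H; elim: s => [|x s IH].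
  have -> : (fun M => \sum_(n <- [::]) g M n : C^o) = (fun=> 0) by apply/funext=> M; rewrite big_nil.
  rewrite big_nil; exact: cvg_cst.
have -> : (fun M => \sum_(n <- x :: s) g M n : C^o) = (fun M => g M x + \sum_(n <- s) g M n)
  by apply/funext=> M; rewrite big_cons.
rewrite big_cons; exact: (cvgD (H x) IH).
Qed.

End C.

Section D.
Variable R : realType.

Lemma amgm (a b t : R) : 0 < t -> a * b <= t * a ^+ 2 + t^-1 * b ^+ 2.
Proof.
move=> t0.
have ti : t * t^-1 = 1 by rewrite divff // gt_eqF.
have ti0 : 0 < t^-1 by rewrite invr_gt0.
have : 0 <= (t * a - b) ^+ 2 by rewrite sqr_ge0.
move=> H.
have : 0 <= t^-1 * (t * a - b) ^+ 2 by rewrite mulr_ge0 // ltW.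
nra.
Qed.

Lemma exp_mono (a b : R) (m : nat) : 0 <= a -> a <= b -> a ^+ m <= b ^+ m.
Proof. move=> a0 ab; apply: lerXn2r => //; rewrite nnegrE //; exact: le_trans ab. Qed.

Lemma pow_ge1 (a : R) (m : nat) : 1 <= a -> (0 < m)%N -> a <= a ^+ m.
Proof.
move=> a1; case: m => // m _.
rewrite exprS -[X in X <= _]mulr1 ler_wpM2l //; first by lra.
exact: exprn_ege1.
Qed.

Lemma PW (m : nat) (W Un Uj en ej ek Wm N0r th : R) (low : bool) :
  (0 < m)%N -> 0 <= Wm -> 0 <= W -> 0 <= Un -> 0 <= Uj -> 1 <= en -> 1 <= ej -> 1 <= ek ->
  ek <= en + ej -> 0 < th -> (low -> W <= Wm /\ ek <= N0r) ->
  W * Uj * Un <= Wm * N0r ^+ 2 / ek ^+ 2 * (Uj ^+ 2 + Un ^+ 2)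
   + 2 ^+ m * (th * ((en ^+ m * Un) ^+ 2 / ej ^+ 2 + (ej ^+ m * Uj) ^+ 2 / en ^+ 2)
   + th^-1 * (if low then 0 else (W / ek ^+ m) ^+ 2) * ((ej ^+ m * Uj) ^+ 2 + (en ^+ m * Un) ^+ 2)).
Proof.
move=> m0 Wm0 W0 Un0 Uj0 en1 ej1 ek1 ekl th0 Hlow.
have thi : 0 < th^-1 by rewrite invr_gt0.
have en0 : 0 < en by lra.
have ej0 : 0 < ej by lra.
have ek0 : 0 < ek by lra.
set X := en ^+ m * Un; set Y := ej ^+ m * Uj.
have X0 : 0 <= X by rewrite mulr_ge0 // exprn_ge0 // ltW.
have Y0 : 0 <= Y by rewrite mulr_ge0 // exprn_ge0 // ltW.
have T2 : 0 <= 2 ^+ m * (th * (X ^+ 2 / ej ^+ 2 + Y ^+ 2 / en ^+ 2)) :> R.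
  apply: mulr_ge0; first exact: exprn_ge0.
  apply: mulr_ge0; first exact: ltW.
  by apply: addr_ge0; apply: divr_ge0; rewrite ?sqr_ge0.
case: low Hlow => [[//|] WWm ekN|_].
  rewrite mulr0 mul0r addr0.
  have ekN2 : 1 <= N0r ^+ 2 / ek ^+ 2.
    rewrite ler_pdivlMr ?exprn_gt0 // mul1r; apply: exp_mono; lra.
  have hh : Uj * Un <= Uj ^+ 2 + Un ^+ 2 by nra.
  have h1a : W * Uj * Un <= Wm * (Uj * Un) by rewrite -mulrA ler_wpM2r // mulr_ge0.
  have h1b : Wm * (Uj * Un) <= Wm * (Uj ^+ 2 + Un ^+ 2) by rewrite ler_wpM2l.
  set S := Uj ^+ 2 + Un ^+ 2.
  have S0 : 0 <= S by rewrite /S addr_ge0 ?sqr_ge0.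
  have h2 : Wm * S * 1 <= Wm * S * (N0r ^+ 2 / ek ^+ 2) by rewrite ler_wpM2l ?mulr_ge0.
  have -> : Wm * N0r ^+ 2 / ek ^+ 2 * S = Wm * S * (N0r ^+ 2 / ek ^+ 2) by ring.
  rewrite mulr1 in h2; rewrite -/S in h1b; lra.
set v := W / ek ^+ m.
have v0 : 0 <= v by rewrite divr_ge0 // exprn_ge0 // ltW.
have Wv : W = v * ek ^+ m by rewrite /v divfK // expf_neq0 // gt_eqF.
clearbody v.
have ekm : ek ^+ m <= 2 ^+ m * (en ^+ m + ej ^+ m).
  have : ek ^+ m <= (en + ej) ^+ m by apply: exp_mono; lra.
  move=> h; apply: le_trans h _.
  have [ej_en|en_ej] := leP ej en.
    have : (en + ej) ^+ m <= (2 * en) ^+ m by apply: exp_mono; lra.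
    rewrite exprMn => h; apply: le_trans h _; rewrite ler_wpM2l ?exprn_ge0 //.
    by rewrite lerDl exprn_ge0 // ltW.
  have : (en + ej) ^+ m <= (2 * ej) ^+ m by apply: exp_mono; lra.
  rewrite exprMn => h; apply: le_trans h _; rewrite ler_wpM2l ?exprn_ge0 //.
  by rewrite lerDr exprn_ge0 // ltW.
have ejY : ej * Uj <= Y by rewrite /Y ler_wpM2r // pow_ge1.
have enX : en * Un <= X by rewrite /X ler_wpM2r // pow_ge1.
have A1 : v * X * Uj <= th * (X ^+ 2 / ej ^+ 2) + th^-1 * (v ^+ 2 * Y ^+ 2).
  have h := amgm (X / ej) (v * Y) th th0.
  rewrite [(v * Y) ^+ 2]exprMn [(X / ej) ^+ 2]expr_div_n in h; apply: (le_trans _ h).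
  have -> : v * X * Uj = (X / ej) * (v * (ej * Uj)) by field; lra.
  by apply: ler_wpM2l; [rewrite divr_ge0 // ltW | apply: ler_wpM2l].
have A2 : v * Y * Un <= th * (Y ^+ 2 / en ^+ 2) + th^-1 * (v ^+ 2 * X ^+ 2).
  have h := amgm (Y / en) (v * X) th th0.
  rewrite [(v * X) ^+ 2]exprMn [(Y / en) ^+ 2]expr_div_n in h; apply: (le_trans _ h).
  have -> : v * Y * Un = (Y / en) * (v * (en * Un)) by field; lra.
  by apply: ler_wpM2l; [rewrite divr_ge0 // ltW | apply: ler_wpM2l].
have B : W * Uj * Un <= 2 ^+ m * (v * X * Uj + v * Y * Un).
  have e1 : W * Uj * Un = (v * Uj * Un) * ek ^+ m by rewrite Wv; ring.
  have e2 : 2 ^+ m * (v * X * Uj + v * Y * Un) = (v * Uj * Un) * (2 ^+ m * (en ^+ m + ej ^+ m)) by rewrite /X /Y; ring.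
  by rewrite e1 e2; apply: ler_wpM2l => //; rewrite !mulr_ge0.
have C1 : 2 ^+ m * (v * X * Uj + v * Y * Un) <= 2 ^+ m * ((th * (X ^+ 2 / ej ^+ 2) + th^-1 * (v ^+ 2 * Y ^+ 2)) + (th * (Y ^+ 2 / en ^+ 2) + th^-1 * (v ^+ 2 * X ^+ 2))).
  by apply: ler_wpM2l; [exact: exprn_ge0 | exact: lerD].
have E : 2 ^+ m * ((th * (X ^+ 2 / ej ^+ 2) + th^-1 * (v ^+ 2 * Y ^+ 2)) + (th * (Y ^+ 2 / en ^+ 2) + th^-1 * (v ^+ 2 * X ^+ 2)))
  = 2 ^+ m * (th * (X ^+ 2 / ej ^+ 2 + Y ^+ 2 / en ^+ 2) + th^-1 * v ^+ 2 * (Y ^+ 2 + X ^+ 2)) by ring.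
have F0 : 0 <= Wm * N0r ^+ 2 / ek ^+ 2 * (Uj ^+ 2 + Un ^+ 2).
  by rewrite mulr_ge0 ?addr_ge0 ?sqr_ge0 // divr_ge0 ?sqr_ge0 // mulr_ge0 // sqr_ge0.
rewrite E in C1; lra.
Qed.



Definition e (n : int) : R := (absz n)%:R + 1.

Lemma e_ge1 n : 1 <= e n.
Proof. by rewrite /e lerDr. Qed.

Lemma e_gt0 n : 0 < e n.
Proof. have := e_ge1 n; lra. Qed.

Lemma e_sub n j : e (n - j) <= e n + e j.
Proof.
rewrite /e.
have H : (absz (n - j) <= absz n + absz j)%N by lia.
have : (absz (n - j))%:R <= (absz n + absz j)%:R :> R by rewrite ler_nat.
rewrite natrD; lra.
Qed.

Lemma e_mul n j : e (n - j) <= e n * e j.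
Proof.
rewrite /e !natr1 -natrM ler_nat; nia.
Qed.

Lemma e_low k N0 : k \in zr N0 -> e k <= N0%:R + 1.
Proof. by rewrite mem_zr /e => H; rewrite lerD2r ler_nat. Qed.

Lemma zr0 (f : int -> R) : \sum_(n <- zr 0) f n = f 0.
Proof. by rewrite zrE /zr_def /= big_cons big_nil addr0. Qed.

Lemma HS K : \sum_(k <- zr K) (e k ^+ 2)^-1 <= 3.
Proof.
suff : \sum_(k <- zr K) (e k ^+ 2)^-1 <= 3 - 2 / (K%:R + 1) by
  move=> H; apply: le_trans H _; rewrite lerBlDr lerDl divr_ge0 // addr_ge0.
elim: K => [|K IH].
  rewrite zr0 /e /= !mulr0n !add0r expr1n invr1. lra.
rewrite zr_rec.
have -> : e (K.+1)%:Z = K%:R + 2 by rewrite /e /= -natr1 -addrA.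
have -> : e (- (K.+1)%:Z) = K%:R + 2 by rewrite /e abszN /= -natr1 -addrA.
have -> : (K.+1)%:R = K%:R + 1 :> R by rewrite -natr1.
set x := K%:R : R.
have x0 : 0 <= x by rewrite /x ler0n.
have -> : x + 1 + 1 = x + 2 by lra.
set a := (x + 1)^-1; set b := (x + 2)^-1.
have a0 : 0 < a by rewrite /a invr_gt0; lra.
have b0 : 0 < b by rewrite /b invr_gt0; lra.
have -> : ((x + 2) ^+ 2)^-1 = b * b by rewrite /b -exprVn expr2.
have hab : b <= a by rewrite /a /b lef_pV2 ?posrE; lra.
have key : b * b + b * b <= 2 * a - 2 * b.
  have : a - b = a * b by rewrite /a /b; field; lra.
  nra.
move: IH; rewrite -/a; lra.
Qed.

Lemma dsumD (s t : seq int) (F G : int -> int -> R) :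
  \sum_(n <- s) \sum_(j <- t) (F n j + G n j) = \sum_(n <- s) \sum_(j <- t) F n j + \sum_(n <- s) \sum_(j <- t) G n j.
Proof. by rewrite -big_split /=; apply: eq_bigr => n _; rewrite big_split. Qed.

Lemma dsumZ (s t : seq int) (c : R) (F : int -> int -> R) :
  \sum_(n <- s) \sum_(j <- t) (c * F n j) = c * \sum_(n <- s) \sum_(j <- t) F n j.
Proof. by rewrite mulr_sumr; apply: eq_bigr => n _; rewrite mulr_sumr. Qed.

Lemma bnd_ge0 (f : int -> R) Kf : (forall x, 0 <= f x) -> (forall K, \sum_(k <- zr K) f k <= Kf) -> 0 <= Kf.
Proof. move=> f0 H; apply: le_trans (H 0%N); exact: sumr_ge0. Qed.

Lemma conv1 (f a : int -> R) Kf Ka N M : (forall x, 0 <= f x) -> (forall x, 0 <= a x) ->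
  (forall K, \sum_(k <- zr K) f k <= Kf) -> (forall K, \sum_(k <- zr K) a k <= Ka) ->
  \sum_(n <- zr N) \sum_(j <- zr M) (f (n - j) * a j) <= Kf * Ka.
Proof.
move=> f0 a0 Hf Ha.
rewrite exchange_big /=.
have -> : \sum_(j <- zr M) \sum_(n <- zr N) f (n - j) * a j = \sum_(j <- zr M) a j * \sum_(n <- zr N) f (n - j).
  by apply: eq_bigr => j _; rewrite mulr_sumr; apply: eq_bigr => n _; rewrite mulrC.
apply: le_trans (_ : \sum_(j <- zr M) a j * Kf <= _).
  apply: ler_sum => j _; apply: ler_wpM2l => //.
  apply: (@sum_inj _ f (fun n => n - j) (absz j)) => //.
    by move=> x y /= H; lia.
  by move=> n; lia.
rewrite -mulr_suml mulrC; apply: ler_wpM2l; [exact: bnd_ge0 Hf | exact: Ha].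
Qed.

Lemma conv2 (f a : int -> R) Kf Ka N M : (forall x, 0 <= f x) -> (forall x, 0 <= a x) ->
  (forall K, \sum_(k <- zr K) f k <= Kf) -> (forall K, \sum_(k <- zr K) a k <= Ka) ->
  \sum_(n <- zr N) \sum_(j <- zr M) (f (n - j) * a n) <= Kf * Ka.
Proof.
move=> f0 a0 Hf Ha.
have -> : \sum_(n <- zr N) \sum_(j <- zr M) f (n - j) * a n = \sum_(n <- zr N) a n * \sum_(j <- zr M) f (n - j).
  by apply: eq_bigr => n _; rewrite mulr_sumr; apply: eq_bigr => j _; rewrite mulrC.
apply: le_trans (_ : \sum_(n <- zr N) a n * Kf <= _).
  apply: ler_sum => n _; apply: ler_wpM2l => //.
  apply: (@sum_inj _ f (fun j => n - j) (absz n)) => //.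
    by move=> x y /= H; lia.
  by move=> j; lia.
rewrite -mulr_suml mulrC; apply: ler_wpM2l; [exact: bnd_ge0 Hf | exact: Ha].
Qed.

Lemma prodS (a b : int -> R) Ka Kb N M : (forall x, 0 <= a x) -> (forall x, 0 <= b x) ->
  (forall K, \sum_(k <- zr K) a k <= Ka) -> (forall K, \sum_(k <- zr K) b k <= Kb) ->
  \sum_(n <- zr N) \sum_(j <- zr M) (a n * b j) <= Ka * Kb.
Proof.
move=> a0 b0 Ha Hb.
have -> : \sum_(n <- zr N) \sum_(j <- zr M) (a n * b j) = (\sum_(n <- zr N) a n) * \sum_(j <- zr M) b j.
  by rewrite mulr_suml; apply: eq_bigr => n _; rewrite mulr_sumr.
apply: ler_pM; [exact: sumr_ge0 | exact: sumr_ge0 | exact: Ha | exact: Hb].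
Qed.


Lemma ME (m : nat) (W U : int -> R) (N0 : nat) (th eps L KX : R) N M :
  (0 < m)%N -> (forall x, 0 <= W x) -> (forall x, 0 <= U x) -> 0 < th ->
  (forall K, \sum_(k <- zr K) (if k \in zr N0 then 0 else (W k / e k ^+ m) ^+ 2) <= eps) ->
  (forall K, \sum_(k <- zr K) U k ^+ 2 <= L) ->
  (forall K, \sum_(k <- zr K) (e k ^+ m * U k) ^+ 2 <= KX) ->
  \sum_(n <- zr N) \sum_(j <- zr M) (W (n - j) * U j * U n) <=
  (\sum_(k <- zr N0) W k) * (N0%:R + 1) ^+ 2 * (3 * L + 3 * L)
  + 2 ^+ m * (th * (KX * 3 + 3 * KX) + th^-1 * (eps * KX + eps * KX)).
Proof.
move=> m0 W0 U0 th0 Heps HL HKX.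
set Wm := \sum_(k <- zr N0) W k.
have Wm0 : 0 <= Wm by exact: sumr_ge0.
set A := Wm * (N0%:R + 1) ^+ 2.
have A0 : 0 <= A by rewrite /A mulr_ge0 // sqr_ge0.
pose X n := (e n ^+ m * U n) ^+ 2.
pose h n := (e n ^+ 2)^-1.
pose t k := if k \in zr N0 then 0 else (W k / e k ^+ m) ^+ 2.
pose c := 2 ^+ m : R.
have c0 : 0 <= c by rewrite /c exprn_ge0.
have thi : 0 < th^-1 by rewrite invr_gt0.
have pw : forall n j, W (n - j) * U j * U n <=
   A * (h (n - j) * U j ^+ 2) + A * (h (n - j) * U n ^+ 2)
   + (c * th) * (X n * h j) + (c * th) * (h n * X j)
   + (c * th^-1) * (t (n - j) * X j) + (c * th^-1) * (t (n - j) * X n).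
  move=> n j.
  have low : (n - j \in zr N0) -> W (n - j) <= Wm /\ e (n - j) <= N0%:R + 1.
    move=> Hk; split; last exact: e_low.
    have := @sum_sub R [:: n - j] (zr N0) W isT (uniq_zr N0) _ W0.
    rewrite big_seq1; apply => x; rewrite inE => /eqP ->; exact: Hk.
  have := @PW m (W (n - j)) (U n) (U j) (e n) (e j) (e (n - j)) Wm (N0%:R + 1) th (n - j \in zr N0) m0 Wm0 (W0 (n - j)) (U0 n) (U0 j) (e_ge1 n) (e_ge1 j) (e_ge1 (n - j)) (e_sub n j) th0 low.
  move=> H; apply: le_trans H _; rewrite le_eqVlt; apply/orP; left; apply/eqP.
  rewrite /A /X /h /t /c /Wm; set P := 2 ^+ m; set E1 := e n ^+ m; set E2 := e j ^+ m; set T := if _ then _ else _; ring.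
apply: le_trans (ler_sum _ (fun n _ => ler_sum _ (fun j _ => pw n j))) _.
rewrite !dsumD !dsumZ.
have hge : forall x, 0 <= h x by move=> x; rewrite /h invr_ge0 exprn_ge0 // ltW // e_gt0.
have Xge : forall x, 0 <= X x by move=> x; rewrite /X sqr_ge0.
have Uge : forall x, 0 <= U x ^+ 2 by move=> x; rewrite sqr_ge0.
have tge : forall x, 0 <= t x by move=> x; rewrite /t; case: ifP => _ //; rewrite sqr_ge0.
have b1 := @conv1 h (fun x => U x ^+ 2) 3 L N M hge Uge HS HL.
have b2 := @conv2 h (fun x => U x ^+ 2) 3 L N M hge Uge HS HL.
have b3 := @prodS X h KX 3 N M Xge hge HKX HS.
have b4 := @prodS h X 3 KX N M hge Xge HS HKX.
have b5 := @conv1 t X eps KX N M tge Xge Heps HKX.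
have b6 := @conv2 t X eps KX N M tge Xge Heps HKX.
have cth0 : 0 <= c * th by rewrite mulr_ge0 // ltW.
have cthi0 : 0 <= c * th^-1 by rewrite mulr_ge0 // ltW.
have := ler_wpM2l A0 b1; have := ler_wpM2l A0 b2.
have := ler_wpM2l cth0 b3; have := ler_wpM2l cth0 b4.
have := ler_wpM2l cthi0 b5; have := ler_wpM2l cthi0 b6.
have E : A * (3 * L + 3 * L) + c * (th * (KX * 3 + 3 * KX) + th^-1 * (eps * KX + eps * KX)) =
  A * (3 * L) + A * (3 * L) + c * th * (KX * 3) + c * th * (3 * KX) + c * th^-1 * (eps * KX) + c * th^-1 * (eps * KX) by ring.
rewrite -/c E; lra.
Qed.

End D.

Section E.
Variable R : realType.
Local Notation C := R[i].
Local Notation nc := (@Normc.normc R).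
Local Notation "x %:C" := (real_complex R x).
Local Notation e := (@e R).

Lemma jb_e (n : int) : jb R n = (e n)%:C.
Proof.
rewrite /jb /e -abszE intrD rmorphD addrC rmorph_nat.

congr (_ + _).
Qed.


Lemma tail (f : int -> R) (KV eps : R) : (forall x, 0 <= f x) ->
  (forall K, \sum_(k <- zr K) f k <= KV) -> 0 < eps ->
  exists N0 : nat, forall K, \sum_(k <- zr K) (if k \in zr N0 then 0 else f k) <= eps.
Proof.
move=> f0 HK e0.
have [cv le] := @ND R f KV f0 HK.
set l := limn _ in le.
have [N1 _ HN] := (cvgrPdist_lt _ _).1 cv _ e0.
have H1 := HN N1 (leqnn N1); rewrite /= in H1.
exists N1 => K.
have [KN|NK] := leqP K N1.
  rewrite big1_seq ?ltW // => k /andP[_ Hk]; by rewrite (@zr_sub _ _ KN _ Hk).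
have -> : \sum_(k <- zr K) (if k \in zr N1 then 0 else f k) =
  \sum_(k <- zr K) f k - \sum_(k <- zr K) (if k \in zr N1 then f k else 0).
  by rewrite -sumrB; apply: eq_bigr => k _; case: ifP => _; rewrite ?subrr ?subr0.
rewrite (@sum_ind R (zr N1) (zr K) f (uniq_zr _) (uniq_zr _) (@zr_sub _ _ (ltnW NK))).
have := le K; have := ler_norm (l - \sum_(n <- zr N1) f n).
rewrite /l; lra.
Qed.

Lemma MB (p : nat -> R) : {homo p : n m / (n <= m)%N >-> n <= m} ->
  cvgn ((fun N => (p N)%:C) : nat -> C^o) -> exists K, forall N, p N <= K.
Proof.
move=> hom /cvg_ex [l Hl].
have e0 : (0 : C) < 1 by [].
have [N1 _ HN] := (cvgrPdist_lt _ _).1 Hl _ e0.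
exists (nc l + 1) => N.
have H := HN (maxn N N1) (leq_maxr _ _); rewrite /= normE in H.
have : nc (l - (p (maxn N N1))%:C) < 1 by rewrite -ltcR.
have := @ncD R l (- (l - (p (maxn N N1))%:C)).
rewrite normcN opprB addrC subrK ncR.
have := ler_norm (p (maxn N N1)).
have := hom _ _ (leq_maxl N N1).
lra.
Qed.

Lemma ncsum (s : seq int) (a : int -> C) : nc (\sum_(n <- s) a n) <= \sum_(n <- s) nc (a n).
Proof.
elim: s => [|x s IH]; first by rewrite !big_nil Normc.normc0.
rewrite !big_cons; apply: le_trans (@ncD R _ _) _; exact: lerD.
Qed.

Lemma ncJ (x : C) : nc (x^*)%C = nc x.
Proof. by apply: complexI; rewrite -!normE normcJ. Qed.

Lemma zpsum_real (f : int -> R) N : zpsum (fun n => (f n)%:C) N = (\sum_(n <- zr N) f n)%:C.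
Proof. by rewrite zpsumE rmorph_sum. Qed.

Lemma hsV (m : nat) (V : int -> C) : Hs false (- (m%:Z)) V ->
  exists KV, forall K, \sum_(k <- zr K) (nc (V k) / e k ^+ m) ^+ 2 <= KV.
Proof.
move=> [_ Hc].
have E : (fun n => jb R n ^ (2 * - (m%:Z)) * `|V n| ^+ 2) = (fun n => ((nc (V n) / e n ^+ m) ^+ 2)%:C).
  apply/funext => n.
  rewrite (_ : 2 * - (m%:Z) = - ((2 * m)%N%:Z)); last by rewrite mulrN PoszM.
  rewrite -exprnN jb_e normE -!rmorphXn -fmorphV -rmorphM; congr (_%:C).
  by rewrite expr_div_n -exprM mulnC mulrC.
rewrite E in Hc.
apply: (@MB (fun N => \sum_(k <- zr N) (nc (V k) / e k ^+ m) ^+ 2)).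
  move=> a b ab; apply: sum_sub => //; [exact: uniq_zr | exact: uniq_zr | exact: zr_sub | move=> x; exact: sqr_ge0].
by under eq_fun do rewrite -zpsum_real.
Qed.


Lemma hsU (neg : bool) (m : nat) (u : int -> C) : Hs neg (m%:Z) u ->
  exists KX, forall K, \sum_(k <- zr K) (e k ^+ m * nc (u k)) ^+ 2 <= KX.
Proof.
move=> [_ Hc].
have E : (fun n => jb R n ^ (2 * (m%:Z)) * `|u n| ^+ 2) = (fun n => ((e n ^+ m * nc (u n)) ^+ 2)%:C).
  apply/funext => n.
  rewrite (_ : 2 * (m%:Z) = ((2 * m)%N%:Z)); last by rewrite PoszM.
  rewrite -exprnP jb_e normE -!rmorphXn -rmorphM; congr (_%:C).
  by rewrite exprMn -exprM mulnC.
rewrite E in Hc.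
apply: (@MB (fun N => \sum_(k <- zr N) (e k ^+ m * nc (u k)) ^+ 2)).
  move=> a b ab; apply: sum_sub => //; [exact: uniq_zr | exact: uniq_zr | exact: zr_sub | move=> x; exact: sqr_ge0].
by under eq_fun do rewrite -zpsum_real.
Qed.

Lemma em_ge1 (n : int) (m : nat) : 1 <= e n ^+ m.
Proof. exact: exprn_ege1 (@e_ge1 R n). Qed.

Lemma U2_le (n : int) (m : nat) (x : R) : 0 <= x -> x ^+ 2 <= (e n ^+ m * x) ^+ 2.
Proof.
move=> x0; rewrite exprMn -[X in X <= _]mul1r ler_wpM2r ?sqr_ge0 //.
exact: exprn_ege1 (em_ge1 n m).
Qed.

Lemma absn_pi (n : int) (m : nat) : (n%:~R * pi) ^+ (2 * m) = (((absz n)%:R : R) * pi) ^+ (2 * m) :> R.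
Proof.
have h : forall x : R, x ^+ 2 = `|x| ^+ 2 by move=> x; rewrite real_normK // num_real.
rewrite !exprM (h (n%:~R * pi)) (h (_ * pi)) !normrM normr_nat.
by rewrite -intr_norm -abszE.
Qed.

Lemma pow_aux (a p : R) (m : nat) : 0 <= a -> 1 <= p ->
  (a + 1) ^+ (2 * m) <= 4 ^+ m * ((a * p) ^+ (2 * m) + 1).
Proof.
move=> a0 p1.
have h4 : (4 : R) ^+ m = 2 ^+ (2 * m) by rewrite exprM; congr (_ ^+ _); rewrite expr2; lra.
have ap0 : 0 <= (a * p) ^+ (2 * m) by rewrite exprn_ge0 // mulr_ge0 //; lra.
have h40 : 0 <= (4 : R) ^+ m by rewrite exprn_ge0.
have [a1|a1] := leP a 1.
  have : (a + 1) ^+ (2 * m) <= 2 ^+ (2 * m) by apply: exp_mono; lra.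
  rewrite -h4 => h; apply: le_trans h _.
  rewrite -[X in X <= _]mulr1 ler_wpM2l //; lra.
have : (a + 1) ^+ (2 * m) <= (2 * (a * p)) ^+ (2 * m) by apply: exp_mono; nra.
rewrite exprMn -h4 => h; apply: le_trans h _.
rewrite ler_wpM2l //; lra.
Qed.

Lemma Xbound (n : int) (m : nat) (x : R) : 0 <= x ->
  (e n ^+ m * x) ^+ 2 <= 4 ^+ m * ((n%:~R * pi) ^+ (2 * m) * x ^+ 2 + x ^+ 2).
Proof.
move=> x0.
rewrite exprMn -exprM mulnC absn_pi.
have := @pow_aux ((absz n)%:R) pi m (ler0n _ _) (le_trans (ler1n R 2) (pi_ge2 R)).
rewrite /e => h.
have x2 : 0 <= x ^+ 2 by rewrite sqr_ge0.
have := ler_wpM2r x2 h.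
move=> h2; apply: le_trans h2 _.
rewrite le_eqVlt; apply/orP; left; apply/eqP; ring.
Qed.


Lemma L2E (m : nat) (u : int -> C) KX :
  (forall K, \sum_(k <- zr K) (e k ^+ m * nc (u k)) ^+ 2 <= KX) ->
  exists Lr : R, L2norm2 u = Lr%:C /\ forall K, \sum_(k <- zr K) nc (u k) ^+ 2 <= Lr.
Proof.
move=> HK.
have b : forall K, \sum_(k <- zr K) nc (u k) ^+ 2 <= KX.
  move=> K; apply: le_trans (HK K); apply: ler_sum => k _; apply: U2_le; exact: nc_ge0.
have [cv le] := @ND R (fun k => nc (u k) ^+ 2) KX (fun x => sqr_ge0 _) b.
exists (limn (fun N => \sum_(k <- zr N) nc (u k) ^+ 2)); split => //.
rewrite /L2norm2 /pairing; apply: zsumE.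
have -> : (fun n => u n * (u n)^*%C) = (fun n => ((nc (u n)) ^+ 2)%:C).
  by apply/funext => n; rewrite -sqr_normc normE rmorphXn.
rewrite (_ : zpsum _ = fun N => (\sum_(k <- zr N) nc (u k) ^+ 2)%:C); last first.
  by apply/funext => N; rewrite zpsum_real.
exact: real_cvgC cv.
Qed.

Lemma tauE (m : nat) (u : int -> C) KX :
  (forall K, \sum_(k <- zr K) (e k ^+ m * nc (u k)) ^+ 2 <= KX) ->
  exists Tr : R, tau m u = Tr%:C /\
    forall K, \sum_(k <- zr K) (k%:~R * pi) ^+ (2 * m) * nc (u k) ^+ 2 <= Tr.
Proof.
move=> HK.
have t0 : forall k : int, 0 <= (k%:~R * pi) ^+ (2 * m) * nc (u k) ^+ 2 :> R.
  move=> k; rewrite absn_pi mulr_ge0 ?sqr_ge0 // exprn_ge0 // mulr_ge0 ?ler0n //.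
  exact: (le_trans _ (pi_ge2 R)).
have b : forall K, \sum_(k <- zr K) (k%:~R * pi) ^+ (2 * m) * nc (u k) ^+ 2 <= pi ^+ (2 * m) * KX.
  move=> K; apply: (@le_trans _ _ (pi ^+ (2 * m) * \sum_(k <- zr K) (e k ^+ m * nc (u k)) ^+ 2)).
    rewrite mulr_sumr; apply: ler_sum => k _.
    have E1 : (e k ^+ m * nc (u k)) ^+ 2 = e k ^+ (2 * m) * nc (u k) ^+ 2 by rewrite exprMn -exprM mulnC.
    have E2 : (((absz k)%:R : R) * pi) ^+ (2 * m) = (absz k)%:R ^+ (2 * m) * pi ^+ (2 * m) by rewrite exprMn.
    rewrite absn_pi E1 E2 mulrA.
    apply: ler_wpM2r; first exact: sqr_ge0.
    rewrite [X in _ <= X]mulrC; apply: ler_wpM2r.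
      by rewrite exprn_ge0 //; exact: (le_trans _ (pi_ge2 R)).
    apply: exp_mono; first exact: ler0n.
    by rewrite /e lerDl.
  apply: ler_wpM2l; [rewrite exprn_ge0 //; exact: (le_trans _ (pi_ge2 R)) | exact: HK].
have [cv le] := @ND R _ _ t0 b.
exists (limn (fun N => \sum_(k <- zr N) (k%:~R * pi) ^+ (2 * m) * nc (u k) ^+ 2)); split => //.
rewrite /tau /pairing; apply: zsumE.
have -> : (fun n => D2m m u n * (u n)^*%C) = (fun n => ((n%:~R * pi) ^+ (2 * m) * nc (u n) ^+ 2)%:C).
  by apply/funext => n; rewrite /D2m -mulrA -sqr_normc normE -rmorphXn -rmorphM.
rewrite (_ : zpsum _ = fun N => (\sum_(k <- zr N) (k%:~R * pi) ^+ (2 * m) * nc (u k) ^+ 2)%:C); last first.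
  by apply/funext => N; rewrite zpsum_real.
exact: real_cvgC cv.
Qed.

Lemma inner (m : nat) (V u : int -> C) KV KX (n : int) :
  (forall K, \sum_(k <- zr K) (nc (V k) / e k ^+ m) ^+ 2 <= KV) ->
  (forall K, \sum_(k <- zr K) (e k ^+ m * nc (u k)) ^+ 2 <= KX) ->
  forall M, \sum_(j <- zr M) nc (V (n - j) * u j) <= e n ^+ m * (KV + KX).
Proof.
move=> HV HX M.
have pw : forall j, nc (V (n - j) * u j) <= e n ^+ m * ((nc (V (n - j)) / e (n - j) ^+ m) ^+ 2 + (e j ^+ m * nc (u j)) ^+ 2).
  move=> j; rewrite ncM.
  set W := nc (V (n - j)); set U := nc (u j).
  have W0 : 0 <= W by exact: nc_ge0.
  have U0 : 0 <= U by exact: nc_ge0.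
  have ek0 : 0 < e (n - j) ^+ m by rewrite exprn_gt0 // e_gt0.
  set v := W / e (n - j) ^+ m.
  have v0 : 0 <= v by rewrite divr_ge0 // ltW.
  have Wv : W = v * e (n - j) ^+ m by rewrite /v divfK // gt_eqF.
  clearbody v.
  have ekm : e (n - j) ^+ m <= e n ^+ m * e j ^+ m.
    rewrite -exprMn; apply: exp_mono; [exact: ltW (@e_gt0 R _) | exact: (@e_mul R n j)].
  have h := @amgm R v (e j ^+ m * U) 1 ltr01.
  rewrite invr1 !mul1r in h.
  have en0 : 0 <= e n ^+ m by rewrite exprn_ge0 // ltW // e_gt0.
  have : W * U <= e n ^+ m * (v * (e j ^+ m * U)).
    rewrite Wv; have -> : v * e (n - j) ^+ m * U = (v * U) * e (n - j) ^+ m by ring.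
    have -> : e n ^+ m * (v * (e j ^+ m * U)) = (v * U) * (e n ^+ m * e j ^+ m) by ring.
    by apply: ler_wpM2l => //; rewrite mulr_ge0.
  move=> h1; apply: le_trans h1 _; exact: ler_wpM2l.
apply: le_trans (ler_sum _ (fun j _ => pw j)) _.
rewrite -mulr_sumr big_split /=.
apply: ler_wpM2l; first by rewrite exprn_ge0 // ltW // e_gt0.
apply: lerD; last exact: HX.
apply: (@sum_inj R (fun k => (nc (V k) / e k ^+ m) ^+ 2) (fun j => n - j) (absz n)) => //.
- by move=> x y /= H; lia.
- by move=> j; lia.
- by move=> x; exact: sqr_ge0.
Qed.

End E.

Local Close Scope classical_set_scope.

Theorem proposition1 (R : realType) (m : nat) (V : int -> R[i]) :
  (0 < m)%N ->
  Hs false (- (m%:Z)) V ->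
  forall neg : bool,
  forall delta : R, 0 < delta ->
  exists Cd : R, 0 <= Cd /\
    forall u : int -> R[i], Hs neg (m%:Z) u ->
      `| tV V u | <= real_complex R delta * tau m u + real_complex R Cd * L2norm2 u.
Proof.
move=> m0 HV neg d d0.
have [KV HKV] := @hsV R m V HV.
pose W k := Normc.normc (V k).
pose c : R := 2 ^+ m.
pose q : R := 4 ^+ m.
have c0 : 0 < c by rewrite /c exprn_gt0.
have q0 : 0 < q by rewrite /q exprn_gt0.
pose th := d / (12 * c * q).
have th0 : 0 < th by apply: divr_gt0 => //; apply: mulr_gt0 => //; apply: mulr_gt0.
pose eps := d * th / (4 * c * q).
have eps0 : 0 < eps by apply: divr_gt0; [exact: mulr_gt0 | apply: mulr_gt0 => //; exact: mulr_gt0].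
have [N0 HN0] := @tail R (fun k => (W k / e R k ^+ m) ^+ 2) KV eps (fun _ => sqr_ge0 _) HKV eps0.
pose A := (\sum_(k <- zr N0) W k) * (N0%:R + 1) ^+ 2.
have A0 : 0 <= A.
  by rewrite /A mulr_ge0 ?sqr_ge0 // sumr_ge0 // => k _; exact: (@nc_ge0 R).
exists (6 * A + d); split; first by lra.
move=> u Hu.
have [KX0 HKX0] := @hsU R neg m u Hu.
have [Lr [L2eq HL]] := @L2E R m u KX0 HKX0.
have [Tr [taueq HT]] := @tauE R m u KX0 HKX0.
pose KX := q * (Tr + Lr).
have HKX : forall K, \sum_(k <- zr K) (e R k ^+ m * Normc.normc (u k)) ^+ 2 <= KX.
  move=> K; apply: le_trans (ler_sum _ (fun k _ => @Xbound R k m _ (@nc_ge0 R (u k)))) _.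
  rewrite -mulr_sumr big_split /=; apply: ler_wpM2l; first exact: ltW.
  by apply: lerD; [exact: HT | exact: HL].
pose B := d * Tr + (6 * A + d) * Lr.
have HME : forall N M, \sum_(n <- zr N) \sum_(j <- zr M) (W (n - j) * Normc.normc (u j) * Normc.normc (u n)) <= B.
  move=> N M.
  apply: le_trans (@ME R m W (fun n => Normc.normc (u n)) N0 th eps Lr KX N M m0
     (fun x => @nc_ge0 R _) (fun x => @nc_ge0 R _) th0 HN0 HL HKX) _.
  rewrite le_eqVlt; apply/orP; left; apply/eqP.
  rewrite /B /KX /eps /th -/c -/A; field.
  by apply/and3P; split; rewrite ?gt_eqF // ?mulr_gt0 //.
pose Q n M := zpsum (fun j => V (n - j) * u j) M.
have HQ : forall n, ((Q n : nat -> R[i]^o) @ \oo --> (mulV V u n : R[i]^o))%classic.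
  move=> n; have [l Hl] := @AS R (fun j => V (n - j) * u j) _ (@inner R m V u KV KX0 n HKV HKX0).
  by rewrite /mulV (@zsumE R _ _ Hl).
have HS : forall N M, \sum_(n <- zr N) Normc.normc (Q n M) * Normc.normc (u n) <= B.
  move=> N M; apply: le_trans (HME N M).
  apply: ler_sum => n _; rewrite -mulr_suml; apply: ler_wpM2r; first exact: (@nc_ge0 R).
  rewrite /Q zpsumE; apply: le_trans (@ncsum R _ _) _.
  by apply: ler_sum => j _; rewrite (@ncM R).
have HF : forall N M, Normc.normc (\sum_(n <- zr N) Q n M * (u n)^*%C) <= B.
  move=> N M; apply: le_trans (@ncsum R _ _) _; apply: le_trans (HS N M).
  by apply: ler_sum => n _; rewrite (@ncM R) (@ncJ R).
have HP : forall N, Normc.normc (zpsum (fun n => mulV V u n * (u n)^*%C) N) <= B.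
  move=> N; rewrite zpsumE.
  apply: (@LB R (fun M => \sum_(n <- zr N) Q n M * (u n)^*%C)); last exact: HF.
  apply: (@FinLim R (zr N) (fun M n => Q n M * (u n)^*%C) (fun n => mulV V u n * (u n)^*%C)).
  move=> n; exact: cvgMr_tmp.
have realize : forall (s : seq int) (a b : int -> R[i]),
    Normc.normc (\sum_(n <- s) `|a n| * `|b n|) = \sum_(n <- s) Normc.normc (a n) * Normc.normc (b n).
  move=> s a b.
  rewrite (eq_bigr (fun n => real_complex R (Normc.normc (a n) * Normc.normc (b n)))); last first.
    by move=> n _; rewrite !normE -rmorphM.
  rewrite -rmorph_sum (@ncR R) ger0_norm //; apply: sumr_ge0 => n _.
  by apply: mulr_ge0; exact: (@nc_ge0 R).
have HA : forall N, \sum_(n <- zr N) Normc.normc (mulV V u n * (u n)^*%C) <= B.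
  move=> N.
  have -> : \sum_(n <- zr N) Normc.normc (mulV V u n * (u n)^*%C) =
     Normc.normc (\sum_(n <- zr N) `|mulV V u n| * `|u n|).
    by rewrite realize; apply: eq_bigr => n _; rewrite (@ncM R) (@ncJ R).
  apply: (@LB R (fun M => \sum_(n <- zr N) `|Q n M| * `|u n|)).
    apply: (@FinLim R (zr N) (fun M n => `|Q n M| * `|u n|) (fun n => `|mulV V u n| * `|u n|)).
    move=> n; exact: (cvgMr_tmp (cvg_norm (HQ n))).
  by move=> M; rewrite realize; exact: HS.
have [lP HlP] := @AS R (fun n => mulV V u n * (u n)^*%C) B HA.
have tVeq : tV V u = lP by rewrite /tV /pairing; exact: (@zsumE R _ _ HlP).
have := @LB R _ _ B HlP HP.
rewrite -tVeq => Hn.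
by rewrite taueq L2eq normE -!rmorphM -rmorphD lecR.
Qed.
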